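(* Let $N\ge2$ and let $GHZ_N=|GHZ_N\rangle\langle GHZ_N|$ with $|GHZ_N\rangle=\frac{1}{\sqrt2}(|0\rangle^{\otimes N}+|1\rangle^{\otimes N})$. Then $C_S(GHZ_N)\ge\lceil\frac{N+1}{2}\rceil$.
   Context: $\mathbb{I},\sigma_X,\sigma_Y,\sigma_Z$ are the identity and Pauli matrices. The notation $\sum_\pi \mathbb{I}^{\otimes j}\otimes A^{\otimes (N-j)}$ denotes the sum, over all distinct placements, of tensor products in which exactly $j$ of the $N$ factors are $\mathbb{I}$ and the other $N-j$ are $A$ (each distinct arrangement counted once). Measurement complexity: for an $N$-qubit permutation-invariant operator $\rho$, $C_S(\rho)$ is the minimal $n_A$ such that there exist real $b_i,c_i,d_i$ and real $\alpha_{ij}$ ($1\le i\le n_A$, $0\le j\le N$) with $\rho=\sum_{i=1}^{n_A}\sum_{j=0}^{N}\alpha_{ij}\sum_\pi\mathbb{I}^{\otimes j}\otimes A_i^{\otimes(N-j)}$, $A_i=b_i\sigma_X+c_i\sigma_Y+d_i\sigma_Z$. *)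

(* Defs.v *)
(* Complex numbers: an arbitrary numClosedFieldType C
   (e.g. the complex numbers); "real" means x \is Num.real. *)
From HB Require Import structures.
From mathcomp Require Import all_boot all_order all_algebra.
Set Implicit Arguments. Unset Strict Implicit. Unset Printing Implicit Defensive.
Import Order.TTheory GRing.Theory Num.Theory.
Local Open Scope ring_scope.

Section Qubits.
Variable C : numClosedFieldType.

(* bit k of the computational-basis index i of an N-qubit register *)
Definition qbit (N : nat) (i : 'I_(2 ^ N)) (k : 'I_N) : 'I_2 :=
  inord (odd (i %/ 2 ^ k)%N).

(* Kronecker (tensor) product  F 0 (x) F 1 (x) ... (x) F (N-1)  *)
Definition tens (N : nat) (F : 'I_N -> 'M[C]_2) : 'M[C]_(2 ^ N) :=
  \matrix_(i, j) \prod_(k < N) F k (qbit i k) (qbit j k).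

Definition sigmaX : 'M[C]_2 :=
  \matrix_(i < 2, j < 2) (if i == j then 0 else 1).
Definition sigmaY : 'M[C]_2 :=
  \matrix_(i < 2, j < 2)
    (if i == j then 0 else if (i : nat) == 0%N then - 'i else 'i).
Definition sigmaZ : 'M[C]_2 :=
  \matrix_(i < 2, j < 2) (if i == j then (if (i : nat) == 0%N then 1 else -1) else 0).

Definition symsum (N j : nat) (A : 'M[C]_2) : 'M[C]_(2 ^ N) :=
  \sum_(S : {set 'I_N} | #|S| == j) tens (fun k => if k \in S then 1%:M else A).

(* rho admits a decomposition with nA settings A_i = b_i X + c_i Y + d_i Z *)
Definition sym_decomposable (N nA : nat) (rho : 'M[C]_(2 ^ N)) : Prop :=
  exists (b c d : 'I_nA -> C) (alpha : 'I_nA -> 'I_N.+1 -> C),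
    (forall i, b i \is Num.real) /\ (forall i, c i \is Num.real) /\
    (forall i, d i \is Num.real) /\ (forall i j, alpha i j \is Num.real) /\
    rho = \sum_(i < nA) \sum_(j < N.+1)
            alpha i j *: symsum N j (b i *: sigmaX + c i *: sigmaY + d i *: sigmaZ).

Definition ket_all (N : nat) (b : 'I_2) : 'cV[C]_(2 ^ N) :=
  \col_i (if [forall k, qbit i k == b] then 1 else 0).

Definition ghz_ket (N : nat) : 'cV[C]_(2 ^ N) :=
  (sqrtC 2)^-1 *: (ket_all N 0 + ket_all N 1).
Definition GHZ (N : nat) : 'M[C]_(2 ^ N) :=
  ghz_ket N *m (map_mx Num.conj (ghz_ket N))^T.

End Qubits.

(* Main.v *)
Require Import Defs.
From HB Require Import structures.
From mathcomp Require Import all_boot all_order all_algebra.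
From mathcomp Require Import ring zify.
Import Order.TTheory GRing.Theory Num.Theory.
Local Open Scope ring_scope.

Lemma key (C : numClosedFieldType) (n : nat) : forall (L : nat) (c z : 'I_n -> C),
  (n < L)%N ->
  (forall m, (0 < m < L)%N -> \sum_i c i * z i ^+ m * (z i)^* ^+ (L - m) = 0) ->
  \sum_i c i * z i ^+ L * (z i)^* ^+ (L - L) = 0.
Proof.
elim: n => [|n IH] L c z hnL H.
  by rewrite big_ord0.
have hrest : forall m, (0 < m <= L)%N ->
   \sum_i c i * z i ^+ m * (z i)^* ^+ (L - m) =
   c ord0 * z ord0 ^+ m * (z ord0)^* ^+ (L - m) +
   \sum_(i < n) c (lift ord0 i) * z (lift ord0 i) ^+ m * (z (lift ord0 i))^* ^+ (L - m).
  by move=> m _; rewrite big_ord_recl.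
have [z0|nz0] := eqVneq (z ord0) 0.
  have E : forall m, (0 < m <= L)%N ->
   \sum_i c i * z i ^+ m * (z i)^* ^+ (L - m) =
   \sum_(i < n) c (lift ord0 i) * z (lift ord0 i) ^+ m * (z (lift ord0 i))^* ^+ (L - m).
    move=> m /andP[m0 mL]; rewrite big_ord_recl z0 expr0n.
    by case: m m0 {mL} => // m _; rewrite /= mulr0 mul0r add0r.
  have L0 : (0 < L)%N by apply: leq_ltn_trans hnL.
  rewrite E ?L0 ?leqnn //.
  apply: IH => //; first by apply: ltn_trans hnL.
  move=> m /andP[m0 mL]; rewrite -E ?m0 ?(ltnW mL) //.
  by apply: H; rewrite m0 mL.
pose w := z ord0.
pose c' := fun i : 'I_n => c (lift ord0 i) * (w^* * z (lift ord0 i) - w * (z (lift ord0 i))^*).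
pose z' := fun i : 'I_n => z (lift ord0 i).
have E : forall m, (m <= L.-1)%N ->
  \sum_i c' i * z' i ^+ m * (z' i)^* ^+ (L.-1 - m) =
  w^* * \sum_i c i * z i ^+ m.+1 * (z i)^* ^+ (L - m.+1)
  - w * \sum_i c i * z i ^+ m * (z i)^* ^+ (L - m).
  move=> m hm.
  have hL : (L - m = (L.-1 - m).+1)%N by lia.
  have hL' : (L - m.+1 = (L.-1 - m))%N by lia.
  rewrite !big_ord_recl hL hL' mulrDr mulrDr opprD addrACA.
  have -> : w^* * (c ord0 * z ord0 ^+ m.+1 * (z ord0)^* ^+ (L.-1 - m)) -
     w * (c ord0 * z ord0 ^+ m * (z ord0)^* ^+ (L.-1 - m).+1) = 0.
    rewrite /w !exprS; ring.
  rewrite add0r !mulr_sumr -sumrB; apply: eq_bigr => i _.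
  rewrite /c' /z' !exprS; ring.
have hL2 : (1 < L)%N by apply: leq_ltn_trans hnL.
have := IH L.-1 c' z'.
rewrite E ?leqnn //.
have -> : L.-1.+1 = L by lia.
rewrite (H L.-1); last by apply/andP; split; lia.
rewrite mulr0 subr0 => /(_ _ _)/eqP.
rewrite mulf_eq0 conjC_eq0 (negbTE nz0) /= => h; apply/eqP; apply: h.
  lia.
move=> m /andP[m0 mL]; rewrite E; last by apply: ltnW.
rewrite !H ?mulr0 ?subr0 //; apply/andP; split; lia.
Qed.

Lemma qbit_val N (i : 'I_(2 ^ N)) k : nat_of_ord (qbit i k) = odd (i %/ 2 ^ k)%N.
Proof. by rewrite /qbit inordK //; case: odd. Qed.

Lemma odd_low a k : odd ((2 ^ a - 1) %/ 2 ^ k)%N = (k < a)%N.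
Proof.
have [ka|ak] := ltnP k a.
  have e : (2 ^ a = 2 ^ (a - k) * 2 ^ k)%N by rewrite -expnD subnK // ltnW.
  have p1 : (0 < 2 ^ k)%N by rewrite expn_gt0.
  have p2 : (2 <= 2 ^ (a - k))%N.
    by rewrite -{1}(expn1 2) leq_exp2l // subn_gt0.
  have -> : (2 ^ a - 1 = (2 ^ (a - k) - 1) * 2 ^ k + (2 ^ k - 1))%N.
    have hle : (2 ^ k <= 2 ^ (a - k) * 2 ^ k)%N by rewrite leq_pmull // ltnW.
    rewrite e mulnBl mul1n; lia.
  rewrite divnMDl // divn_small; last by lia.
  rewrite addn0 oddB; last by lia.
  by rewrite oddX subn_eq0 leqNgt ka.
rewrite divn_small //.
have : (2 ^ a <= 2 ^ k)%N by rewrite leq_exp2l.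
have : (0 < 2 ^ a)%N by rewrite expn_gt0.
lia.
Qed.

Lemma odd_high N a k : (a <= N)%N -> (k < N)%N ->
  odd ((2 ^ N - 2 ^ a) %/ 2 ^ k)%N = (a <= k)%N.
Proof.
move=> aN kN.
have p1 : (0 < 2 ^ k)%N by rewrite expn_gt0.
have eN : (2 ^ N = 2 ^ (N - k) * 2 ^ k)%N by rewrite -expnD subnK // ltnW.
have p3 : (2 <= 2 ^ (N - k))%N by rewrite -{1}(expn1 2) leq_exp2l // subn_gt0.
have [ka|ak] := ltnP k a.
  have e : (2 ^ a = 2 ^ (a - k) * 2 ^ k)%N by rewrite -expnD subnK // ltnW.
  have -> : (2 ^ N - 2 ^ a = (2 ^ (N - k) - 2 ^ (a - k)) * 2 ^ k)%N by rewrite e eN mulnBl.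
  have p2 : (2 <= 2 ^ (a - k))%N by rewrite -{1}(expn1 2) leq_exp2l // subn_gt0.
  have le : (2 ^ (a - k) <= 2 ^ (N - k))%N by rewrite leq_exp2l //; lia.
  have h1 : (0 < N - k)%N by lia.
  have h2 : (0 < a - k)%N by lia.
  by rewrite mulnK // oddB // !oddX !eqn0Ngt h1 h2.
have e : (2 ^ k = 2 ^ (k - a) * 2 ^ a)%N by rewrite -expnD subnK.
have p4 : (0 < 2 ^ a)%N by rewrite expn_gt0.
have p5 : (0 < 2 ^ (k - a))%N by rewrite expn_gt0.
have -> : (2 ^ N - 2 ^ a = (2 ^ (N - k) - 1) * 2 ^ k + (2 ^ k - 2 ^ a))%N.
  have hle : (2 ^ k <= 2 ^ (N - k) * 2 ^ k)%N by rewrite leq_pmull // ltnW.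
  have hak : (2 ^ a <= 2 ^ k)%N by rewrite leq_exp2l.
  rewrite eN mulnBl mul1n; lia.
rewrite divnMDl // divn_small; last by lia.
rewrite addn0 oddB; last by lia.
by rewrite oddX subn_eq0 leqNgt kN.
Qed.

Lemma decomp_entry (C : numClosedFieldType) N nA (alpha : 'I_nA -> 'I_N.+1 -> C)
  (A : 'I_nA -> 'M[C]_2) (x y : 'I_(2 ^ N)) :
  (forall k, qbit x k != qbit y k) ->
  (\sum_(i < nA) \sum_(j < N.+1) alpha i j *: symsum N j (A i)) x y =
  \sum_i alpha i ord0 * \prod_k A i (qbit x k) (qbit y k).
Proof.
move=> hxy; rewrite summxE; apply: eq_bigr => i _.
rewrite summxE big_ord_recl big1 ?addr0; last first.
  move=> j _; rewrite mxE /symsum summxE big1 ?mulr0 // => S /eqP hS.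
  have : S != set0 by rewrite -cards_eq0 hS.
  case/set0Pn => k kS; rewrite mxE (bigD1 k) //= kS mxE.
  by rewrite (negbTE (hxy k)) mul0r.
rewrite mxE /symsum summxE; congr (_ * _).
rewrite (eq_bigl (pred1 set0)); last by move=> S; rewrite /= cards_eq0.
rewrite big_pred1_eq mxE; apply: eq_bigr => k _; by rewrite in_set0.
Qed.

Lemma A_entry (C : numClosedFieldType) (b c d : C) (p q : 'I_2) :
  (b *: sigmaX C + c *: sigmaY C + d *: sigmaZ C) p q =
  if (nat_of_ord p == 0)%N then (if (nat_of_ord q == 0)%N then d else b - c * 'i)
  else (if (nat_of_ord q == 0)%N then b + c * 'i else - d).
Proof.
rewrite !mxE.
case: p => [[|[|p]] hp] //; case: q => [[|[|q]] hq] //=; rewrite /=; ring.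
Qed.

Lemma prod_split (C : numClosedFieldType) N a (u v : C) : (a <= N)%N ->
  \prod_(k < N) (if (k < a)%N then u else v) = u ^+ a * v ^+ (N - a).
Proof.
move=> aN.
rewrite -(big_mkord xpredT (fun k => if (k < a)%N then u else v)).
rewrite (@big_cat_nat _ _ _ a 0 N _ _ (leq0n a) aN) /=.
rewrite (eq_big_nat _ _ (F2 := fun _ => u)); last by move=> k /andP[_ ->].
rewrite (eq_big_nat _ _ (F1 := fun k => if (k < a)%N then u else v) (F2 := fun _ => v)); last first.
  by move=> k /andP[h _]; rewrite ltnNge h.
by rewrite !prodr_const_nat subn0.
Qed.

Lemma ghz_entry (C : numClosedFieldType) N (x y : 'I_(2 ^ N)) :
  GHZ C N x y = ghz_ket C N x 0 * (ghz_ket C N y 0)^*.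
Proof. by rewrite /GHZ mxE big_ord1 !mxE. Qed.

Theorem theorem4 (C : numClosedFieldType) (N : nat) (hN : (2 <= N)%N)
  (nA : nat) :
  @sym_decomposable C N nA (@GHZ C N) -> ((N + 2) %/ 2 <= nA)%N.
Proof.
move=> [b [c [d [alpha [hb [hc [hd [halpha hrho]]]]]]]].
suff : (N <= nA)%N by move=> h; lia.
rewrite leqNgt; apply/negP => hlt.
pose z := fun i => b i - c i * 'i.
have zc : forall i, (z i)^* = b i + c i * 'i.
  by move=> i; rewrite /z rmorphB rmorphM /= conjCi !conj_Creal // mulrN opprK.
have ent : forall a (hx : (2 ^ a - 1 < 2 ^ N)%N) (hy : (2 ^ N - 2 ^ a < 2 ^ N)%N),
   (a <= N)%N ->
   GHZ C N (Ordinal hx) (Ordinal hy) = \sum_i alpha i ord0 * ((z i)^* ^+ a * z i ^+ (N - a)).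
  move=> a hx hy aN; rewrite hrho decomp_entry; last first.
    move=> k; apply/negP => /eqP /(congr1 (@nat_of_ord 2)).
    rewrite !qbit_val /= odd_low odd_high //; case: ltnP => //.
  apply: eq_bigr => i _; congr (_ * _); rewrite -prod_split //.
  apply: eq_bigr => k _; rewrite A_entry !qbit_val /= odd_low odd_high //.
  by case: ltnP => _ /=; rewrite ?zc.
have s0 : (sqrtC (2 : C))^-1 != 0 by rewrite invr_eq0 sqrtC_eq0 pnatr_eq0.
have Sm : forall m, (m <= N)%N -> \sum_i alpha i ord0 * z i ^+ m * (z i)^* ^+ (N - m) =
           \sum_i alpha i ord0 * ((z i)^* ^+ (N - m) * z i ^+ (N - (N - m))).
  move=> m mN; apply: eq_bigr => i _; rewrite subKn //; ring.
have hxa : forall a, (a <= N)%N -> (2 ^ a - 1 < 2 ^ N)%N.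
  move=> a aN; have : (2 ^ a <= 2 ^ N)%N by rewrite leq_exp2l.
  have : (0 < 2 ^ N)%N by rewrite expn_gt0. lia.
have hya : forall a, (2 ^ N - 2 ^ a < 2 ^ N)%N.
  move=> a; have : (0 < 2 ^ a)%N by rewrite expn_gt0.
  have : (0 < 2 ^ N)%N by rewrite expn_gt0. lia.
have k0 : (0 < N)%N by lia.
have k1 : (N.-1 < N)%N by lia.
have HS : forall m, (0 < m < N)%N ->
    \sum_i alpha i ord0 * z i ^+ m * (z i)^* ^+ (N - m) = 0.
  move=> m /andP[m0 mN].
  rewrite Sm; last by apply: ltnW.
  have E := ent (N - m)%N (hxa _ (leq_subr m N)) (hya (N - m)%N) (leq_subr m N).
  rewrite -E.
  rewrite ghz_entry [ghz_ket _ _ _ _]mxE.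
  have Hx : forall bb : 'I_2, ket_all C N bb (Ordinal (hxa _ (leq_subr m N))) 0 = 0.
    move=> bb; rewrite mxE; case: forallP => // h.
    have := h (Ordinal k0); have := h (Ordinal k1).
    rewrite -!val_eqE /= !qbit_val /= !odd_low.
    have -> : (0 < N - m)%N by lia.
    have -> : (N.-1 < N - m)%N = false by lia.
    by move/eqP <- => /eqP.
  by rewrite [X in _ * X * _]mxE Hx Hx addr0 mulr0 mul0r.
have := @key C nA N (fun i => alpha i ord0) z hlt HS.
rewrite (Sm N) // subnn -(ent 0 (hxa 0 (leq0n N)) (hya 0) (leq0n N)) ghz_entry.
rewrite !mxE.
set X := Ordinal _. set Y := Ordinal _.
have hX : forall k, qbit X k = 0.
  by move=> k; apply: ord_inj; rewrite qbit_val /= odd_low.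
have hY : forall k, qbit Y k = 1.
  by move=> k; apply: ord_inj; rewrite qbit_val /= odd_high // leq0n.
have -> : [forall k, qbit X k == 0] = true by apply/forallP => k; rewrite hX.
have -> : [forall k, qbit X k == 1] = false.
  by apply/negP => /forallP /(_ (Ordinal k0)); rewrite hX.
have -> : [forall k, qbit Y k == 1] = true by apply/forallP => k; rewrite hY.
have -> : [forall k, qbit Y k == 0] = false.
  by apply/negP => /forallP /(_ (Ordinal k0)); rewrite hY.
rewrite addr0 add0r !mulr1 => /eqP; rewrite mul_conjC_eq0 (negbTE s0) //.
Qed.
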